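(* Let $\hat q$ be an $n\times n$ parametric matrix and $\hat p$ an $n\times n$ parametric matrix, and let $M$ be an $n\times n$ $(\hat q,\hat p)$-Manin matrix with entries in $\mathfrak R$. Then for every multi-index $I=(i_1,\dots,i_n)$ with entries in $\{1,\dots,n\}$, $$\sum_{\sigma\in S_n}\varepsilon(\hat q,\sigma)\,M_{\sigma(1),i_1}M_{\sigma(2),i_2}\cdots M_{\sigma(n),i_n}=\varepsilon(\hat p,I)\,\mathrm{cdet}_{\hat q}(M).$$
   Context: $\mathfrak R$ is an associative unital algebra over $\mathbb C$. A parametric $n\times n$ matrix is a matrix $\hat q=(q_{ij})$ of nonzero complex numbers with $q_{ij}q_{ji}=1$ and $q_{ii}=1$. For parametric matrices $\hat q$ ($n\times n$) and $\hat p$ ($m\times m$), an $n\times m$ matrix $M=(M_{ij})$ with entries in $\mathfrak R$ is a $(\hat q,\hat p)$-Manin matrix if $M_{ik}M_{jk}=q_{ji}M_{jk}M_{ik}$ for all $1\le i<j\le n$, $1\le k\le m$, and $M_{ik}M_{jl}-q_{ji}p_{kl}M_{jl}M_{ik}+p_{kl}M_{il}M_{jk}-q_{ji}M_{jk}M_{il}=0$ for all $i<j$, $k<l$. For a multi-index $I=(i_1,\dots,i_r)$, $\varepsilon(\hat q,I)=0$ if two entries of $I$ coincide, and otherwise $\varepsilon(\hat q,I)=\prod_{s<t,\ i_s>i_t}(-q_{i_si_t})$. For $\sigma\in S_n$, $\varepsilon(\hat q,\sigma)=\prod_{s<t,\ \sigma(s)>\sigma(t)}(-q_{\sigma(s)\sigma(t)})$.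 The column $\hat q$-determinant of an $n\times n$ matrix $M$ is $\mathrm{cdet}_{\hat q}(M)=\sum_{\sigma\in S_n}\varepsilon(\hat q,\sigma)M_{\sigma(1),1}\cdots M_{\sigma(n),n}$. *)

(* Defs.v *)
From HB Require Import structures.
From mathcomp Require Import all_boot all_order all_algebra all_fingroup.
From mathcomp Require Import complex.
From mathcomp Require Import Rstruct.
From Stdlib Require Rdefinitions.
Set Implicit Arguments. Unset Strict Implicit. Unset Printing Implicit Defensive.
Import Order.TTheory GRing.Theory Num.Theory.
Local Open Scope ring_scope.


Definition parametric (n : nat) (q : 'M[complex Rdefinitions.R]_n) : Prop :=
  [/\ forall i j, q i j != 0,
      forall i j, q i j * q j i = 1
    & forall i, q i i = 1].

Definition Manin (A : algType (complex Rdefinitions.R)) (n m : nat)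
    (q : 'M[complex Rdefinitions.R]_n) (p : 'M[complex Rdefinitions.R]_m)
    (M : 'M[A]_(n, m)) : Prop :=
  (forall (i j : 'I_n) (k : 'I_m), (i < j)%N ->
      M i k * M j k = q j i *: (M j k * M i k)) /\
  (forall (i j : 'I_n) (k l : 'I_m), (i < j)%N -> (k < l)%N ->
      M i k * M j l - (q j i * p k l) *: (M j l * M i k)
      + p k l *: (M i l * M j k) - q j i *: (M j k * M i l) = 0).

(* epsilon(q, I) for a multi-index I = (i_1,...,i_r) with entries in {1..n}
   (indices shifted to 0..n-1). *)
Definition eps_idx (n r : nat) (q : 'M[complex Rdefinitions.R]_n)
    (I : 'I_r -> 'I_n) : complex Rdefinitions.R :=
  if injectiveb I then
    \prod_(s < r) \prod_(t < r | (s < t)%N && (I t < I s)%N) (- q (I s) (I t))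
  else 0.

Definition eps_perm (n : nat) (q : 'M[complex Rdefinitions.R]_n) (s : 'S_n)
  : complex Rdefinitions.R :=
  \prod_(a < n) \prod_(b < n | (a < b)%N && (s b < s a)%N) (- q (s a) (s b)).

Definition cdet (A : algType (complex Rdefinitions.R)) (n : nat)
    (q : 'M[complex Rdefinitions.R]_n) (M : 'M[A]_n) : A :=
  \sum_(s : 'S_n) eps_perm q s *: \prod_(k < n) M (s k) k.

(* Main.v *)
Require Import Defs.
From HB Require Import structures.
From mathcomp Require Import all_boot all_order all_algebra all_fingroup.
From mathcomp Require Import complex Rstruct.
From mathcomp Require Import zify.
Import GRing.Theory.
Local Open Scope ring_scope.

Lemma tau_lt n (k k' : 'I_n) (hk : val k' = (val k).+1) (y1 y2 : 'I_n) :
  (tperm k k' y1 < tperm k k' y2)%N =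
  if (y1 == k) && (y2 == k') then false
  else if (y1 == k') && (y2 == k) then true else (y1 < y2)%N.
Proof.
have hk2 : nat_of_ord k' = (nat_of_ord k).+1 := hk.
have hkk : k != k' by apply/eqP => e; move: hk2; rewrite e; lia.
case: (tpermP k k' y1) => [->|->|/eqP h1 /eqP h2];
case: (tpermP k k' y2) => [->|->|/eqP h3 /eqP h4];
rewrite ?eqxx ?(negbTE hkk) ?(eq_sym k' k) ?(negbTE hkk) ?(negbTE h1) ?(negbTE h2)
  ?(negbTE h3) ?(negbTE h4) ?andbF ?andbT ?andFb //=.
all: try lia.
all: try (rewrite -?val_eqE /= in h1 h2 h3 h4; lia).
all: try (rewrite -?val_eqE /= in h1 h2; lia).
all: try (rewrite -?val_eqE /= in h3 h4; lia).
Qed.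

Lemma pairs_swap n (k k' : 'I_n) (hk : val k' = (val k).+1) (R : Type) (idx : R)
  (op : Monoid.com_law idx) (F : 'I_n -> 'I_n -> R) (g g' : 'I_n -> 'I_n)
  (hg : forall x, g' x = g (tperm k k' x)) (hlt : (g k < g k')%N) :
  \big[op/idx]_(x : 'I_n * 'I_n | (x.1 < x.2)%N && (g' x.2 < g' x.1)%N) F (g' x.1) (g' x.2)
  = op (F (g k') (g k))
     (\big[op/idx]_(x : 'I_n * 'I_n | (x.1 < x.2)%N && (g x.2 < g x.1)%N) F (g x.1) (g x.2)).
Proof.
have hk2 : nat_of_ord k' = (nat_of_ord k).+1 := hk.
have hkk : k != k' by apply/eqP => e; move: hk2; rewrite e; lia.
rewrite (reindex_inj (h := fun y => (tperm k k' y.1, tperm k k' y.2))) /=; last first.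
  by move=> [a b] [c d] /= [/perm_inj -> /perm_inj ->].
rewrite (bigD1 (k', k)) /=; last first.
  by rewrite !hg !tpermK tpermL tpermR hlt andbT; lia.
rewrite !hg !tpermK; congr (op _ _).
apply: eq_big => -[y1 y2] /=; last by rewrite !hg !tpermK.
rewrite hg hg !tpermK tau_lt //.
have [->|n1] := eqVneq y1 k; have [->|n2] := eqVneq y2 k';
  rewrite ?eqxx ?(negbTE hkk) ?(negbTE n1) ?(negbTE n2) /= ?andbT ?andbF //.
- by rewrite [(g k' < g k)%N]ltnNge (ltnW hlt) andbF.
- by rewrite xpair_eqE (negbTE hkk) andbT.
- rewrite xpair_eqE (eq_sym k' k) (negbTE hkk) !andbF /= andbT.
  by have [->|n3] := eqVneq y1 k'; rewrite ?ltnn ?andbT.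
- rewrite xpair_eqE.
  have [->|n3] := eqVneq y1 k'; have [->|n4] := eqVneq y2 k;
    rewrite ?eqxx ?andbT ?andbF ?andFb ?andTb /= ?andbT //.
  by rewrite hk2 ltnNge leqnSn.
Qed.

Local Notation C := (complex Rdefinitions.R).

Definition Epr n (q : 'M[C]_n) (g : 'I_n -> 'I_n) : C :=
  \prod_(x : 'I_n * 'I_n | (x.1 < x.2)%N && (g x.2 < g x.1)%N) (- q (g x.1) (g x.2)).

Arguments Epr {n}.

Definition ninv n (g : 'I_n -> 'I_n) : nat :=
  \sum_(x : 'I_n * 'I_n | (x.1 < x.2)%N && (g x.2 < g x.1)%N) 1%N.

Arguments ninv {n}.

Lemma eps_permE n (q : 'M[C]_n) (s : 'S_n) : eps_perm q s = Epr q (fun x => s x).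
Proof. by rewrite /eps_perm pair_big_dep. Qed.

Lemma eps_idxE n (q : 'M[C]_n) (I : 'I_n -> 'I_n) :
  eps_idx q I = if injectiveb I then Epr q I else 0.
Proof. by rewrite /eps_idx pair_big_dep. Qed.

Lemma Epr_swap n (k k' : 'I_n) (hk : val k' = (val k).+1) (q : 'M[C]_n) (g g' : 'I_n -> 'I_n)
  (hg : forall x, g' x = g (tperm k k' x)) (hlt : (g k < g k')%N) :
  Epr q g' = - q (g k') (g k) * Epr q g.
Proof. exact: (@pairs_swap _ k k' hk C 1 *%R (fun a b => - q a b) g g' hg hlt). Qed.

Lemma ninv_swap n (k k' : 'I_n) (hk : val k' = (val k).+1) (g g' : 'I_n -> 'I_n)
  (hg : forall x, g' x = g (tperm k k' x)) (hlt : (g k < g k')%N) :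
  ninv g' = (ninv g).+1.
Proof.
have := (@pairs_swap _ k k' hk nat 0%N addn (fun a b => 1%N) g g' hg hlt).
by rewrite /ninv => ->.
Qed.

Lemma zmod_aux (V : zmodType) (x y z : V) : x - y + z = 0 -> x = y - z.
Proof. by move/eqP; rewrite -addrA addr_eq0 opprD opprK => /eqP. Qed.

Arguments zmod_aux {V x y z}.

Definition Dm (A : algType C) n (q : 'M[C]_n) (M : 'M[A]_n) (i j c d : 'I_n) : A :=
  M i c * M j d - q j i *: (M j c * M i d).

Arguments Dm {A n}.

Lemma D_swap (A : algType C) n (q p : 'M[C]_n) (M : 'M[A]_n)
  (hp : parametric p) (hM : Manin q p M) (i j c d : 'I_n) (hij : (i < j)%N) :
  Dm q M i j d c = - p d c *: Dm q M i j c d.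
Proof.
case: hp => _ hp1 _; case: hM => hM1 hM2; rewrite /Dm.
case: (ltngtP c d) => [hcd|hcd|/val_inj ->].
- have R := hM2 i j c d hij hcd.
  rewrite addrAC [X in X + _ = _]addrAC in R.
  rewrite (zmod_aux R) scalerBr !scalerA.
  have -> : - p d c * (q j i * p c d) = - q j i.
    by rewrite mulNr mulrCA [p d c * _]mulrC hp1 mulr1.
  have -> : - p d c * p c d = - 1 by rewrite mulNr [p d c * _]mulrC hp1.
  by rewrite scaleNr scaleN1r opprK addrC.
- have R := hM2 i j d c hij hcd.
  rewrite addrAC [X in X + _ = _]addrAC in R.
  rewrite (zmod_aux R) scalerBr !scalerA.
  by rewrite mulNr !scaleNr opprK mulrC addrC.
- by rewrite hM1 // subrr scaler0.
Qed.

Lemma insubd_val n (k : 'I_n) m : (m < n)%N -> val (insubd k m) = m.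
Proof. by move=> h; rewrite val_insubd h. Qed.

Lemma prod_split (A : algType C) n (k k' : 'I_n) (hk : val k' = (val k).+1)
  (f : 'I_n -> A) :
  \prod_(m < n) f m = (\prod_(0 <= m < k) f (insubd k m)) * (f k * f k')
                      * \prod_(k.+2 <= m < n) f (insubd k m).
Proof.
have hk2 : nat_of_ord k' = (nat_of_ord k).+1 := hk.
have hk'n := ltn_ord k'.
have -> : \prod_(m < n) f m = \prod_(m < n) f (insubd k m).
  by apply: eq_bigr => m _; congr f; apply: val_inj; rewrite insubd_val.
rewrite -(big_mkord xpredT (fun m => f (insubd k m))).
rewrite (@big_cat_nat _ _ _ k 0 n) /=; [|lia|lia].
rewrite [X in _ * X = _]big_ltn; last by lia.
rewrite [X in _ * (_ * X) = _]big_ltn; last by lia.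
have -> : insubd k k = k by apply: val_inj; rewrite insubd_val.
have -> : insubd k k.+1 = k' by apply: val_inj; rewrite insubd_val -?hk2.
by rewrite !mulrA.
Qed.

Arguments prod_split {A n k k'}.

Lemma tau_fix n (k k' : 'I_n) (hk : val k' = (val k).+1) m :
  (m < k)%N || (k.+2 <= m < n)%N -> tperm k k' (insubd k m) = insubd k m.
Proof.
have hk2 : nat_of_ord k' = (nat_of_ord k).+1 := hk.
have hkn := ltn_ord k; move=> hm.
have hmn : (m < n)%N by lia.
by apply: tpermD; rewrite -val_eqE /= insubd_val //; lia.
Qed.

Definition Fm (A : algType C) n (q : 'M[C]_n) (M : 'M[A]_n) (J : 'I_n -> 'I_n) : A :=
  \sum_(s : 'S_n) eps_perm q s *: \prod_(m < n) M (s m) (J m).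
Arguments Fm {A n}.

Definition Xp (A : algType C) n (M : 'M[A]_n) (k : 'I_n) (s : 'S_n) (J : 'I_n -> 'I_n) : A :=
  \prod_(0 <= m < k) M (s (insubd k m)) (J (insubd k m)).
Definition Yp (A : algType C) n (M : 'M[A]_n) (k : 'I_n) (s : 'S_n) (J : 'I_n -> 'I_n) : A :=
  \prod_(k.+2 <= m < n) M (s (insubd k m)) (J (insubd k m)).
Arguments Xp {A n}. Arguments Yp {A n}.

Lemma F_decomp (A : algType C) n (q : 'M[C]_n) (M : 'M[A]_n) (k k' : 'I_n)
  (hk : val k' = (val k).+1) (J : 'I_n -> 'I_n) :
  Fm q M J = \sum_(s : 'S_n | (s k < s k')%N)
     eps_perm q s *: (Xp M k s J * Dm q M (s k) (s k') (J k) (J k') * Yp M k s J).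
Proof.
have hk2 : nat_of_ord k' = (nat_of_ord k).+1 := hk.
have hkk : k != k' by apply/eqP => e; move: hk2; rewrite e; lia.
rewrite /Fm (bigID (fun s : 'S_n => (s k < s k')%N)) /=.
rewrite [X in _ + X](reindex_inj (mulgI (tperm k k'))) /=.
rewrite [X in _ + X = _](eq_bigl (fun s : 'S_n => (s k < s k')%N)); last first.
  move=> s; rewrite !permM tpermL tpermR -leqNgt leq_eqVlt.
  by rewrite val_eqE (inj_eq perm_inj) (negbTE hkk).
rewrite -big_split /=; apply: eq_bigr => s hs.
rewrite !eps_permE (@Epr_swap n k k' hk q (fun x => s x) (fun x => (tperm k k' * s)%g x));
  [| by move=> x; rewrite permM | by []].
rewrite !(prod_split hk) !permM tpermL tpermR.
have -> : \prod_(0 <= m < k) M ((tperm k k' * s)%g (insubd k m)) (J (insubd k m))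
          = Xp M k s J.
  apply: eq_big_nat => m hm; rewrite permM tau_fix //; lia.
have -> : \prod_(k.+2 <= m < n) M ((tperm k k' * s)%g (insubd k m)) (J (insubd k m))
          = Yp M k s J.
  apply: eq_big_nat => m hm; rewrite permM tau_fix //; lia.
rewrite /Dm mulrBr mulrBl scalerBr -scalerAr -scalerAl scalerA.
by rewrite mulNr scaleNr mulrC.
Qed.

Arguments F_decomp {A n}.
Arguments D_swap {A n q p M}.

Lemma F_swap (A : algType C) n (q p : 'M[C]_n) (M : 'M[A]_n)
  (hp : parametric p) (hM : Manin q p M) (k k' : 'I_n)
  (hk : val k' = (val k).+1) (J J' : 'I_n -> 'I_n)
  (hJ : forall x, J' x = J (tperm k k' x)) :
  Fm q M J' = - p (J k') (J k) *: Fm q M J.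
Proof.
have hk2 : nat_of_ord k' = (nat_of_ord k).+1 := hk.
rewrite !(F_decomp q M _ _ hk) scaler_sumr; apply: eq_bigr => s hs.
have -> : Xp M k s J' = Xp M k s J.
  apply: eq_big_nat => m hm; rewrite hJ tau_fix //; lia.
have -> : Yp M k s J' = Yp M k s J.
  apply: eq_big_nat => m hm; rewrite hJ tau_fix //; lia.
rewrite !hJ tpermL tpermR (D_swap hp hM) //.
by rewrite -scalerAr -scalerAl !scalerA mulrC.
Qed.

Lemma F_eq0 (A : algType C) n (q p : 'M[C]_n) (M : 'M[A]_n)
  (hM : Manin q p M) (k k' : 'I_n)
  (hk : val k' = (val k).+1) (J : 'I_n -> 'I_n) (hJ : J k = J k') :
  Fm q M J = 0.
Proof.
rewrite (F_decomp q M _ _ hk); apply: big1 => s hs.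
by rewrite /Dm hJ hM.1 // subrr mulr0 mul0r scaler0.
Qed.

Lemma incr_id n (J : 'I_n -> 'I_n)
  (h : forall k k' : 'I_n, val k' = (val k).+1 -> (J k < J k')%N) : forall m, J m = m.
Proof.
move=> m; have hn : (0 < n)%N by case: m => /= i; lia.
pose f i := nat_of_ord (J (insubd m i)).
have hs : forall i, (i.+1 < n)%N -> (f i < f i.+1)%N.
  move=> i hi; apply: h; rewrite /= !insubd_val //; lia.
have c1 : forall i, (i < n)%N -> (i <= f i)%N.
  elim=> [|i IH] hi; first by [].
  have := hs i hi; have := IH (ltnW hi); lia.
have c2 : forall d, (d < n)%N -> (f (n.-1 - d)%N + d <= n.-1)%N.
  elim=> [|d IH] hd.
    rewrite subn0 addn0 /f; have := ltn_ord (J (insubd m n.-1)); lia.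
  have e : (n.-1 - d.+1).+1 = (n.-1 - d)%N by lia.
  have := hs (n.-1 - d.+1)%N; rewrite e => /(_ ltac:(lia)).
  have := IH (ltnW hd); lia.
have hm := ltn_ord m.
have e1 : insubd m m = m by apply: val_inj; rewrite insubd_val.
apply: val_inj => /=.
have := c1 m hm; have := c2 (n.-1 - m)%N ltac:(lia).
have -> : (n.-1 - (n.-1 - m))%N = m by lia.
rewrite /f e1; lia.
Qed.

Arguments ninv_swap {n k k'}.
Arguments Epr_swap {n k k'}.
Arguments F_swap {A n q p M}.
Arguments F_eq0 {A n q p M}.
Arguments incr_id {n J}.

Lemma step (A : algType C) n (q p : 'M[C]_n) (M : 'M[A]_n)
  (hp : parametric p) (hM : Manin q p M) (J : 'I_n -> 'I_n)
  (IH : forall J', (ninv J' < ninv J)%N -> Fm q M J' = eps_idx p J' *: Fm q M id) :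
  Fm q M J = eps_idx p J *: Fm q M id.
Proof.
case: (boolP [exists k : 'I_n, exists k' : 'I_n, (val k' == (val k).+1) && (J k' < J k)%N]).
  case/existsP => k /existsP [k' /andP [/eqP hk hlt]].
  pose J' := fun x => J (tperm k k' x).
  have hJJ : forall x, J x = J' (tperm k k' x) by move=> x; rewrite /J' tpermK.
  have hlt' : (J' k < J' k')%N by rewrite /J' tpermL tpermR.
  have hinv := ninv_swap hk _ _ hJJ hlt'.
  rewrite (F_swap hp hM _ _ hk _ _ hJJ) (IH J') ?hinv // scalerA.
  congr (_ *: _); rewrite !eps_idxE.
  have -> : injectiveb J' = injectiveb J.
    apply/injectiveP/injectiveP => hi x y.
      by move=> e; apply: (perm_inj (s := tperm k k')); apply: hi; rewrite /J' !tpermK.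
    by rewrite /J' => /hi /perm_inj.
  case: (injectiveb J); last by rewrite mulr0.
  by rewrite (Epr_swap hk p _ _ hJJ hlt').
move=> hno.
have hle : forall k k' : 'I_n, val k' = (val k).+1 -> (J k <= J k')%N.
  move=> k k' hk; rewrite leqNgt; apply/negP => hlt; apply: (negP hno).
  by apply/existsP; exists k; apply/existsP; exists k'; rewrite hk eqxx hlt.
case: (boolP [exists k : 'I_n, exists k' : 'I_n, (val k' == (val k).+1) && (J k == J k')]).
  case/existsP=> k /existsP [k' /andP [/eqP hk /eqP he]].
  rewrite (F_eq0 hM _ _ hk _ he) eps_idxE.
  have -> : injectiveb J = false.
    apply/negbTE/injectiveP => hi; have := hi _ _ he => e.
    by move: hk; rewrite e; lia.
  by rewrite scale0r.
move=> hno2.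
have hlt : forall k k' : 'I_n, val k' = (val k).+1 -> (J k < J k')%N.
  move=> k k' hk; rewrite ltn_neqAle hle // andbT val_eqE.
  apply/negP => he; apply: (negP hno2).
  by apply/existsP; exists k; apply/existsP; exists k'; rewrite hk eqxx he.
have hid := incr_id hlt.
have -> : Fm q M J = Fm q M id.
  by apply: eq_bigr => s _; congr (_ *: _); apply: eq_bigr => m _; rewrite hid.
rewrite eps_idxE.
have -> : injectiveb J by apply/injectiveP => x y; rewrite !hid.
rewrite /Epr big1 ?scale1r // => x /andP [h1]; rewrite !hid; lia.
Qed.

Lemma main_all (A : algType C) n (q p : 'M[C]_n) (M : 'M[A]_n)
  (hp : parametric p) (hM : Manin q p M) (J : 'I_n -> 'I_n) :
  Fm q M J = eps_idx p J *: Fm q M id.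
Proof.
suff H : forall N J, (ninv J <= N)%N -> Fm q M J = eps_idx p J *: Fm q M id.
  exact: (H _ J (leqnn _)).
elim=> [|N IH] J0 hN; apply: (step _ _ _ _ _ hp hM) => J' hJ'.
  by move: hN hJ'; lia.
by apply: IH; lia.
Qed.

Theorem mainTheorem1 (A : algType (complex Rdefinitions.R)) (n : nat)
    (q p : 'M[complex Rdefinitions.R]_n) (M : 'M[A]_n)
    (hq : parametric q) (hp : parametric p) (hM : Manin q p M)
    (I : 'I_n -> 'I_n) :
  \sum_(s : 'S_n) eps_perm q s *: \prod_(k < n) M (s k) (I k)
  = eps_idx p I *: cdet q M.
Proof.
have H := main_all _ _ _ _ _ hp hM I.
rewrite /Fm in H; rewrite H /cdet; congr (_ *: _).
Qed.
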